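(* Let $n\ge1$. Averaged over all quasi-Stirling permutations of size $n$, the mean number of ascents is $(3n+1)/4$, the mean number of descents is $(3n+1)/4$, and the mean number of plateaus is $(n+1)/2$.
   Context: A quasi-Stirling permutation of size $n$ is a permutation $\pi_1\cdots\pi_{2n}$ of the multiset $\{1,1,2,2,\dots,n,n\}$ with no indices $i<j<k<\ell$ such that $\pi_i=\pi_k$ and $\pi_j=\pi_\ell$. For a sequence $\pi_1\cdots\pi_r$: $i\in\{1,\dots,r\}$ is a descent if $\pi_i>\pi_{i+1}$ or $i=r$; $i\in\{0,\dots,r-1\}$ is an ascent if $i=0$ or $\pi_i<\pi_{i+1}$; $i\in\{1,\dots,r-1\}$ is a plateau if $\pi_i=\pi_{i+1}$. *)

(* Defs.v *)
From mathcomp Require Import all_boot all_order all_algebra.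
Set Implicit Arguments. Unset Strict Implicit. Unset Printing Implicit Defensive.

(* Words are sequences of naturals, 1-indexed in the paper: pi_i = nth 0 w (i-1). *)
Definition pos (w : seq nat) (i : nat) : nat := nth 0 w i.-1.

Definition multiset_perm (n : nat) (w : seq nat) : bool :=
  (size w == 2 * n) && all (fun k => count_mem k w == 2) (iota 1 n).

Definition no_1212 (w : seq nat) : bool :=
  [forall i : 'I_(size w), forall j : 'I_(size w), forall k : 'I_(size w),
     forall l : 'I_(size w),
     ~~ [&& (i < j)%N, (j < k)%N, (k < l)%N,
            nth 0 w i == nth 0 w k & nth 0 w j == nth 0 w l]].

Definition quasi_stirling (n : nat) (w : seq nat) : bool :=
  multiset_perm n w && no_1212 w.

Definition des (w : seq nat) : nat :=
  let r := size w in
  count (fun i => (pos w i > pos w i.+1)%N || (i == r)) (iota 1 r).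

Definition asc (w : seq nat) : nat :=
  let r := size w in
  count (fun i => (i == 0) || (pos w i < pos w i.+1)%N) (iota 0 r).

Definition plat (w : seq nat) : nat :=
  let r := size w in
  count (fun i => pos w i == pos w i.+1) (iota 1 r.-1).

(* The finite set of quasi-Stirling permutations of size n, encoded as
   (2n)-tuples over 'I_n.+1 (entries 0..n; entry 0 is excluded by the
   multiset condition). *)
Definition qs_word (n : nat) (t : (2 * n).-tuple 'I_n.+1) : seq nat :=
  map (@nat_of_ord _) t.

Definition QS (n : nat) : {set (2 * n).-tuple 'I_n.+1} :=
  [set t | quasi_stirling n (qs_word t)].

Definition mean_stat (st : seq nat -> nat) (n : nat) : rat :=
  ((\sum_(t in QS n) st (qs_word t))%:R / (#|QS n|)%:R)%R.

(* Main.v *)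
Require Import Defs.
From mathcomp Require Import all_boot all_order all_algebra.
From mathcomp Require Import zify.
Set Implicit Arguments. Unset Strict Implicit. Unset Printing Implicit Defensive.

Inductive good : seq nat -> Prop :=
| g_nil : good [::]
| g_cons a u v : a \notin u -> a \notin v -> (forall x, x \in u -> x \notin v) ->
    good u -> good v -> good (a :: u ++ a :: v).

Definition P12 (w : seq nat) : Prop := forall i j k l, i < j -> j < k -> k < l -> l < size w ->
  nth 0 w i = nth 0 w k -> nth 0 w j = nth 0 w l -> False.

Definition tw (w : seq nat) := forall x, x \in w -> count_mem x w = 2.

Lemma nth_w a u v i : nth 0 (a :: u ++ a :: v) i =
  if i == 0 then a else if i <= size u then nth 0 u i.-1 else if i == (size u).+1 then a
  else nth 0 v (i - (size u).+2).
Proof.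
case: i => [|i] //=. rewrite nth_cat.
case: ltnP => h1 //.
case: (ltngtP i (size u)) => h2; first lia.
  have -> : i - size u = (i - (size u).+1).+1 by lia.
  by rewrite ifF; last lia.
by rewrite h2 subnn eqxx.
Qed.

Lemma good_P w : good w -> P12 w.
Proof.
elim=> {w} [|a u v au av uv gu IHu gv IHv]; first by move=> i j k l /= _ _ _.
move=> i j k l ij jk kl; rewrite /= size_cat /= => lw.
rewrite !nth_w.
set p := size u.
move: lw; rewrite -/p => lw.

have memu : forall m, m < p -> nth 0 u m \in u.
  by move=> m hm; apply: mem_nth.
have memv : forall m, m < size v -> nth 0 v m \in v.
  by move=> m hm; apply: mem_nth.
have neqa : forall x, x \in u -> x <> a by move=> x xu xa; move: au; rewrite -xa xu.
have neqb : forall x, x \in v -> x <> a by move=> x xu xa; move: av; rewrite -xa xu.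
have neqc : forall x y, x \in u -> y \in v -> x <> y.
  by move=> x y xu yv xy; move: (uv _ xu); rewrite xy yv.
set q := size v in lw memv *. have ep : size u = p by []. have eq : size v = q by []. clearbody p q.
move=> E1 E2.
move: E1 E2; do ![case: ifP => ?]; move=> E1 E2; repeat match goal with H : _ = false |- _ => move/negbT: H => H end; try lia; first [ apply: (IHu i.-1 j.-1 k.-1 l.-1 _ _ _ _ E1 E2); rewrite ?ep ?eq; lia
  | apply: (IHv (i - p.+2) (j - p.+2) (k - p.+2) (l - p.+2) _ _ _ _ E1 E2); rewrite ?ep ?eq; lia
  | match goal with
    | E : a = nth 0 u ?m |- _ => apply: (neqa _ (memu m _)); [lia| by rewrite -E]
    | E : nth 0 u ?m = a |- _ => apply: (neqa _ (memu m _)); [lia| by rewrite E]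
    | E : a = nth 0 v ?m |- _ => apply: (neqb _ (memv m _)); [lia| by rewrite -E]
    | E : nth 0 v ?m = a |- _ => apply: (neqb _ (memv m _)); [lia| by rewrite E]
    | E : nth 0 u ?m = nth 0 v ?m' |- _ => apply: (neqc _ _ (memu m _) (memv m' _) E); lia
    | E : nth 0 v ?m' = nth 0 u ?m |- _ => apply: (neqc _ _ (memu m _) (memv m' _) (esym E)); lia
    end
  | idtac ].
Qed.

Lemma nth_wu a u v i : i < size u -> nth 0 (a :: u ++ a :: v) i.+1 = nth 0 u i.
Proof. by move=> h; rewrite /= nth_cat h. Qed.

Lemma nth_wv a u v i : nth 0 (a :: u ++ a :: v) ((size u).+2 + i) = nth 0 v i.
Proof.
rewrite /= nth_cat ifF; last by lia.
by have -> : (size u).+1 + i - size u = i.+1 by lia.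
Qed.

Lemma nth_wa a u v : nth 0 (a :: u ++ a :: v) (size u).+1 = a.
Proof. by rewrite /= nth_cat ltnn subnn. Qed.

Lemma cnt_w (a : nat) u v x : count_mem x (a :: u ++ a :: v) =
  (a == x) + count_mem x u + (a == x) + count_mem x v.
Proof. by rewrite /= count_cat /=; lia. Qed.

Lemma P_good w : tw w -> P12 w -> good w.
Proof.
elim: (size w).+1 {-2}w (ltnSn (size w)) => // N IH [|a s] hN tww Pw; first exact: g_nil.
have as_ : a \in s.
  apply/negPn/negP => /count_memPn h; move: (tww a (mem_head _ _)).
  by rewrite /= eqxx h.
have [u [v [es au]]] : exists u v, s = u ++ a :: v /\ a \notin u.
  exists (take (index a s) s), (drop (index a s).+1 s); split.
    by rewrite -drop_index // cat_take_drop.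
  by apply/negP => /index_ltn; rewrite ltnn.
subst s.
have av : a \notin v.
  apply/count_memPn; move: (tww a (mem_head _ _)); rewrite cnt_w eqxx.
  move/count_memPn: au => ->; lia.
have uv : forall x, x \in u -> x \notin v.
  move=> x xu; apply/negP => xv.
  have := index_mem x v; rewrite xv => hv.
  have := index_mem x u; rewrite xu => hu.
  apply: (Pw 0 (index x u).+1 (size u).+1 ((size u).+2 + index x v)).
  - by [].
  - by rewrite ltnS.
  - lia.
  - by rewrite /= size_cat /= !addSn addnS !ltnS ltn_add2l.
  - by rewrite nth_wa.
  - by rewrite nth_wu // nth_wv !nth_index.
have hs : size (a :: u ++ a :: v) = (size u + size v).+2 by rewrite /= size_cat /= addnS.
rewrite hs in hN.
apply: g_cons => //; apply: IH.
- lia.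
- move=> x xu; move: (tww x); rewrite cnt_w inE mem_cat xu orbT => /(_ isT).
  have -> : (a == x) = false by apply/negP => /eqP ax; rewrite ax xu in au.
  by move/count_memPn: (uv x xu) => ->; lia.
- move=> i j k l ij jk kl lu E1 E2.
  apply: (Pw i.+1 j.+1 k.+1 l.+1) => //.
  + rewrite hs; lia.
  + by rewrite !nth_wu //; lia.
  + by rewrite !nth_wu //; lia.
- lia.
- move=> x xv; move: (tww x); rewrite cnt_w inE mem_cat /= inE xv !orbT => /(_ isT).
  have -> : (a == x) = false by apply/negP => /eqP ax; rewrite ax xv in av.
  have : x \notin u by apply/negP => xu; move: (uv x xu); rewrite xv.
  by move/count_memPn => ->; lia.
- move=> i j k l ij jk kl lu E1 E2.
  apply: (Pw ((size u).+2 + i) ((size u).+2 + j) ((size u).+2 + k) ((size u).+2 + l)).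
  + lia.
  + lia.
  + lia.
  + rewrite hs; lia.
  + by rewrite !nth_wv.
  + by rewrite !nth_wv.
Qed.

Lemma no_1212P w : reflect (P12 w) (no_1212 w).
Proof.
apply: (iffP idP).
- move=> H i j k l ij jk kl lw E1 E2.
  have hi : i < size w by lia.
  have hj : j < size w by lia.
  have hk : k < size w by lia.
  move/forallP: H => /(_ (Ordinal hi)) /forallP /(_ (Ordinal hj)) /forallP /(_ (Ordinal hk)) /forallP /(_ (Ordinal lw)).
  by rewrite /= ij jk kl E1 E2 !eqxx.
- move=> H; apply/forallP => i; apply/forallP => j; apply/forallP => k; apply/forallP => l.
  apply/negP => /and5P [ij jk kl /eqP E1 /eqP E2].
  exact: (H i j k l ij jk kl (ltn_ord l) E1 E2).
Qed.

Lemma count_mem_cons (k : nat) l w : k \notin l ->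
  count (mem (k :: l)) w = count_mem k w + count (mem l) w.
Proof.
move=> kl; elim: w => //= y w ->; rewrite inE.
case: eqP => [->|_] /=; last lia.
by rewrite (negbTE kl); lia.
Qed.

Lemma count_mem_all (l w : seq nat) : uniq l -> all (fun k => count_mem k w == 2) l ->
  count (mem l) w = 2 * size l.
Proof.
elim: l => [|k l IH] /=; first by elim: w.
case/andP=> kl ul /andP [/eqP ck al].
by rewrite count_mem_cons // ck IH //; lia.
Qed.

Lemma mp_mem n w x : multiset_perm n w -> x \in w -> 0 < x <= n.
Proof.
case/andP=> /eqP sw al xw.
have : all (mem (iota 1 n)) w.
  by rewrite all_count count_mem_all ?iota_uniq // size_iota sw.
move/allP/(_ x xw) => /= h; move: h; rewrite mem_iota; lia.
Qed.

Lemma mp_tw n w : multiset_perm n w -> tw w.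
Proof.
move=> mp x xw; have := mp_mem mp xw.
case/andP: mp => _ /allP al hx; apply/eqP/al; rewrite mem_iota; lia.
Qed.

Lemma qsP n w : quasi_stirling n w <-> multiset_perm n w /\ good w.
Proof.
split.
- case/andP=> mp /no_1212P P; split => //; exact: P_good (mp_tw mp) P.
- case=> mp g; rewrite /quasi_stirling mp /=; apply/no_1212P; exact: good_P.
Qed.

Fixpoint Mf {T : eqType} (k : nat) (s : seq T) : seq T :=
  match k, s with
  | k'.+1, a :: s' => let i := index a s' in a :: Mf k' (drop i.+1 s') ++ a :: Mf k' (take i s')
  | _, _ => s
  end.
Definition M {T : eqType} (s : seq T) := Mf (size s) s.

Lemma Mf_eq (T : eqType) k1 k2 (s : seq T) : size s <= k1 -> size s <= k2 -> Mf k1 s = Mf k2 s.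
Proof.
elim: k1 k2 s => [|k1 IH] [|k2] [|a s] //= h1 h2.
congr (a :: _ ++ a :: _); apply: IH; rewrite ?size_drop ?size_take_min; lia.
Qed.

Lemma M_nil (T : eqType) : M ([::] : seq T) = [::].
Proof. by []. Qed.

Lemma M_cons (T : eqType) (a : T) u v : a \notin u -> M (a :: u ++ a :: v) = a :: M v ++ a :: M u.
Proof.
move=> au; rewrite /M /= index_pivot // take_size_cat //.
have -> : drop (size u).+1 (u ++ a :: v) = v.
  by rewrite -cat_rcons drop_size_cat // size_rcons.
congr (a :: _ ++ a :: _); apply: Mf_eq; rewrite // size_cat /=; lia.
Qed.

Lemma M_map (T U : eqType) (f : T -> U) s : injective f -> M (map f s) = map f (M s).
Proof.
move=> fi; rewrite /M size_map; move: (size s) => k.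
elim: k s => [|k IH] [|a s] //=.
by rewrite index_map // -map_drop -map_take !IH map_cat.
Qed.

Lemma good_M w : good w -> good (M w) /\ perm_eq (M w) w.
Proof.
elim=> [|a u v au av uv gu [gMu pu] gv [gMv pv]]; first by split; [exact: g_nil|].
rewrite M_cons //; split.
- apply: g_cons => //.
  + by rewrite (perm_mem pv).
  + by rewrite (perm_mem pu).
  + move=> x; rewrite (perm_mem pv) (perm_mem pu) => xv; apply/negP => xu.
    by move: (uv x xu); rewrite xv.
- apply/permP => p; rewrite /= !count_cat /= (permP pu) (permP pv).
move: (nat_of_bool (p a)) (count p u) (count p v) => x y z; lia.
Qed.

Lemma M_inv w : good w -> M (M w) = w.
Proof.
elim=> [|a u v au av uv gu IHu gv IHv] //.
rewrite M_cons // M_cons ?IHu ?IHv //.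
by case: (good_M gv) => _ pv; rewrite (perm_mem pv).
Qed.

Fixpoint pl (s : seq nat) : nat :=
  match s with x :: ((y :: _) as t) => (x == y) + pl t | _ => 0 end.

Lemma pl_cat s y t : pl (s ++ y :: t) = pl s + pl (y :: t) + ((s != [::]) && (last y s == y)).
Proof.
elim: s => [|x s IH] /=; first lia.
case: s IH => [|z s] /= IH; first lia.
rewrite IH; lia.
Qed.

Lemma pl_cons a u : a \notin u -> pl (a :: u) = pl u.
Proof.
case: u => [|y u] //=; rewrite inE negb_or => /andP [/negbTE -> _]; lia.
Qed.

Lemma pl_w a u v : a \notin u -> a \notin v -> pl (a :: u ++ a :: v) = pl u + pl v + (u == [::]).
Proof.
move=> au av; rewrite -cat_cons pl_cat !pl_cons //=.
case: u au => [|y u] au /=; first lia.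
have : last y u \in y :: u by apply: mem_last.
case: eqP => [->|]; last lia.
by rewrite (negbTE au).
Qed.

Lemma pl_M w : good w -> 2 * (pl (M w) + pl w + (w == [::])) = size w + 2.
Proof.
elim=> [|a u v au av uv gu IHu gv IHv] //.
have [gMu pu] := good_M gu; have [gMv pv] := good_M gv.
rewrite M_cons // !pl_w //; last by rewrite (perm_mem pu).
  2: by rewrite (perm_mem pv).
have eu : (M u == [::]) = (u == [::]) by case: (u) pu => [|? ?] /perm_size; case: (M u).
have ev : (M v == [::]) = (v == [::]) by case: (v) pv => [|? ?] /perm_size; case: (M v).
rewrite ev /= size_cat /=.
move: IHu IHv; move: (pl (M u)) (pl u) (pl (M v)) (pl v) (nat_of_bool (u == [::])) (nat_of_bool (v == [::])) (size u) (size v) => *; lia.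
Qed.

Lemma iotaS m n : iota m.+1 n = map succn (iota m n).
Proof. by elim: n m => //= n IH m; rewrite IH. Qed.

Definition gtc (w : seq nat) := count (fun i => nth 0 w i > nth 0 w i.+1) (iota 0 (size w).-1).
Definition ltc (w : seq nat) := count (fun i => nth 0 w i < nth 0 w i.+1) (iota 0 (size w).-1).
Definition eqc (w : seq nat) := count (fun i => nth 0 w i == nth 0 w i.+1) (iota 0 (size w).-1).

Lemma plat_eqc w : plat w = eqc w.
Proof. by rewrite /plat /eqc iotaS count_map. Qed.

Lemma eqc_pl w : eqc w = pl w.
Proof.
rewrite /eqc; elim: w => [|x [|y s] IH] //=.
move: IH => /= <-.
by rewrite iotaS count_map.
Qed.

Lemma des_gtc w : 0 < size w -> des w = gtc w + 1.
Proof.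
rewrite /des /gtc; case: (size w) => [|m] // _.
rewrite -addn1 iotaD count_cat iotaS count_map /= addn1 add1n eqxx orbT /=; congr (_ + _).
apply: eq_in_count => i; rewrite mem_iota /= => hi.
by rewrite /pos /=; case: eqP; first lia; rewrite orbF.
Qed.

Lemma asc_ltc w : 0 < size w -> asc w = ltc w + 1.
Proof.
rewrite /asc /ltc; case: (size w) => [|m] // _ /=.
by rewrite iotaS count_map addnC.
Qed.

Lemma tri w : gtc w + ltc w + eqc w = (size w).-1.
Proof.
rewrite /gtc /ltc /eqc -[in RHS](size_iota 0 (size w).-1).
elim: (iota 0 _) => //= i s <-.
case: ltngtP => /= _; lia.
Qed.

Lemma good_map (f : nat -> nat) w : injective f -> good w -> good (map f w).
Proof.
move=> fi; elim=> [|a u v au av uv gu IHu gv IHv] //=; first exact: g_nil.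
rewrite map_cat /=; apply: g_cons => //; rewrite ?mem_map //.
move=> x /mapP [y yu ->]; rewrite mem_map //; exact: uv.
Qed.

Definition sw (T : eqType) (a b x : T) := if x == a then b else if x == b then a else x.

Lemma swK (T : eqType) (a b : T) : involutive (sw a b).
Proof.
move=> x; rewrite /sw; case: (eqVneq x a) => [->|xa]; first by rewrite eqxx; case: eqVneq.
case: (eqVneq x b) => [->|xb]; first by rewrite eqxx.
by rewrite (negbTE xa) (negbTE xb).
Qed.

Lemma sw_sym (T : eqType) (a b x : T) : sw b a x = sw a b x.
Proof.
rewrite /sw; case: (eqVneq x a) => [->|xa]; case: (eqVneq x b) => [|xb] //.
all: by case: eqVneq => // ->.
Qed.

Lemma sw_val m (a b x : 'I_m) : val (sw a b x) = sw (val a) (val b) (val x).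
Proof. by rewrite /sw !val_eqE; case: ifP => //; case: ifP. Qed.

Lemma count_sw (a b k : nat) w : count_mem k (map (sw a b) w) = count_mem (sw a b k) w.
Proof.
rewrite count_map; apply: eq_count => x /=.
apply/eqP/eqP => [<-|->]; by rewrite swK.
Qed.

Lemma qs_sw n (w : seq nat) a b : quasi_stirling n w -> a \in w -> b \in w ->
  quasi_stirling n (map (sw a b) w).
Proof.
move=> /qsP [mp g] aw bw; apply/qsP; split; last first.
  apply: good_map => //; exact: (can_inj (swK a b)).
have ha := mp_mem mp aw; have hb := mp_mem mp bw.
case/andP: mp => sz /allP al; rewrite /multiset_perm size_map sz /=.
apply/allP => k kin; rewrite count_sw; apply: al.
rewrite /sw; case: ifP => _; first by rewrite mem_iota; lia.
case: ifP => _ //; by rewrite mem_iota; lia.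
Qed.

Lemma count_sum (T : Type) (a : pred T) s : count a s = \sum_(i <- s) (a i : nat).
Proof. by elim: s => [|x s IH]; rewrite ?big_nil ?big_cons //= IH. Qed.

Lemma sum_invol (I : finType) (A : {set I}) (h : I -> I) (F : I -> nat) :
  (forall t, t \in A -> h t \in A) -> (forall t, t \in A -> h (h t) = t) ->
  \sum_(t in A) F t = \sum_(t in A) F (h t).
Proof.
move=> hA hh; pose h' t := if t \in A then h t else t.
have inv : involutive h'.
  move=> t; rewrite /h'; case: (boolP (t \in A)) => tA /=; first by rewrite hA // hh.
  by rewrite (negbTE tA).
rewrite (reindex_inj (inv_inj inv)); apply: eq_big => t; rewrite /h'.
  by case: (boolP (t \in A)) => tA /=; rewrite ?hA // (negbTE tA).
by case: (boolP (t \in A)) => tA //=; rewrite (negbTE tA).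
Qed.

Lemma sw_a (T : eqType) (a b : T) : sw a b a = b.
Proof. by rewrite /sw eqxx. Qed.

Lemma sw_b (T : eqType) (a b : T) : sw a b b = a.
Proof. by rewrite /sw; case: eqVneq => [->|_]; rewrite ?eqxx. Qed.

Section Tup.
Variable n : nat.
Notation TT := ((2 * n).-tuple 'I_n.+1).

Lemma qs_in (t : TT) : (t \in QS n) = quasi_stirling n (qs_word t).
Proof. by rewrite inE. Qed.

Definition hM (t : TT) : TT := insubd t (M (val t)).

Lemma M_qs (t : TT) : qs_word t = map val (val t).
Proof. by []. Qed.

Lemma hM_val (t : TT) : t \in QS n -> val (hM t) = M (val t).
Proof.
rewrite qs_in => /qsP [_ g]; have [_ p] := good_M g.
rewrite /hM val_insubd ifT //.
have := perm_size p; rewrite /qs_word M_map ?size_map ?size_tuple => [->|] //.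
exact: val_inj.
Qed.

Lemma hM_qs (t : TT) : t \in QS n -> qs_word (hM t) = M (qs_word t).
Proof. by move=> tq; rewrite /qs_word hM_val // M_map //; exact: val_inj. Qed.

Lemma hM_in (t : TT) : t \in QS n -> hM t \in QS n.
Proof.
move=> tq; rewrite qs_in hM_qs //; move: tq; rewrite qs_in => /qsP [mp g].
have [gM p] := good_M g; apply/qsP; split => //.
case/andP: mp => sz al; rewrite /multiset_perm (perm_size p) sz /=.
apply/allP => k kin; rewrite (permP p); exact: (allP al).
Qed.

Lemma hM_inv (t : TT) : t \in QS n -> hM (hM t) = t.
Proof.
move=> tq; apply: val_inj; rewrite hM_val ?hM_in // hM_val //.
apply: (inj_map val_inj); rewrite -!M_map; try exact: val_inj.
apply: M_inv; move: tq; rewrite qs_in => /qsP [].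
by [].
Qed.

Lemma sum_plat : 1 <= n ->
  2 * \sum_(t in QS n) plat (qs_word t) = #|QS n| * (n + 1).
Proof.
move=> hn.
have e : \sum_(t in QS n) plat (qs_word t) = \sum_(t in QS n) plat (qs_word (hM t)).
  apply: sum_invol; [exact: hM_in | exact: hM_inv].
rewrite mul2n -addnn {2}e -big_split /= -sum_nat_const; apply: eq_bigr => t tq.
rewrite hM_qs // !plat_eqc !eqc_pl.
move: tq; rewrite qs_in => /qsP [mp g]; have := pl_M g.
have sz : size (qs_word t) = 2 * n by rewrite size_map size_tuple.
rewrite sz; case: (qs_word t) sz => [|x s] /=; lia.
Qed.

Definition hS (i : nat) (t : TT) : TT := map_tuple (sw (nth ord0 t i) (nth ord0 t i.+1)) t.

Lemma hS_qs i (t : TT) : i.+1 < 2 * n ->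
  qs_word (hS i t) = map (sw (nth 0 (qs_word t) i) (nth 0 (qs_word t) i.+1)) (qs_word t).
Proof.
move=> hi; rewrite /qs_word /= -map_comp (nth_map ord0) ?size_tuple; last lia.
rewrite (nth_map ord0) ?size_tuple //.
by rewrite -map_comp; apply: eq_map => x /=; rewrite sw_val.
Qed.

Lemma hS_in i (t : TT) : i.+1 < 2 * n -> t \in QS n -> hS i t \in QS n.
Proof.
move=> hi; rewrite !qs_in hS_qs // => q; apply: qs_sw => //; apply: mem_nth;
  rewrite size_map size_tuple; lia.
Qed.

Lemma hS_inv i (t : TT) : i.+1 < 2 * n -> hS i (hS i t) = t.
Proof.
move=> hi; apply: val_inj; rewrite /hS /=.
rewrite (nth_map ord0) ?size_tuple; last lia.
rewrite (nth_map ord0) ?size_tuple //.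
rewrite sw_a sw_b -map_comp -[RHS]map_id; apply: eq_map => x /=.
by rewrite sw_sym swK.
Qed.

Lemma sum_gt_lt i : i.+1 < 2 * n ->
  \sum_(t in QS n) (nth 0 (qs_word t) i > nth 0 (qs_word t) i.+1 : nat) =
  \sum_(t in QS n) (nth 0 (qs_word t) i < nth 0 (qs_word t) i.+1 : nat).
Proof.
move=> hi; rewrite (sum_invol _ (fun t => @hS_in i t hi) (fun t _ => @hS_inv i t hi)).
apply: eq_bigr => t tq; rewrite hS_qs //.
have sz : size (qs_word t) = 2 * n by rewrite size_map size_tuple.
rewrite (nth_map 0) ?sz; last lia.
rewrite (nth_map 0) ?sz; last lia.
by rewrite sw_a sw_b.
Qed.

End Tup.

Fixpoint dbl (l : seq nat) := if l is k :: l' then k :: k :: dbl l' else [::].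

Lemma mem_dbl x l : (x \in dbl l) = (x \in l).
Proof. by elim: l => //= k l IH; rewrite !inE IH orbA orbb. Qed.

Lemma size_dbl l : size (dbl l) = 2 * size l.
Proof. by elim: l => //= k l ->; lia. Qed.

Lemma count_dbl x l : count_mem x (dbl l) = 2 * count_mem x l.
Proof. by elim: l => //= k l ->; lia. Qed.

Lemma good_dbl l : uniq l -> good (dbl l).
Proof.
elim: l => [_|k l IH] /=; first exact: g_nil.
case/andP=> kl ul; change (good (k :: [::] ++ k :: dbl l)); apply: g_cons => //; [by rewrite mem_dbl | exact: g_nil | exact: IH].
Qed.

Lemma QS_gt0 n : 0 < #|QS n|.
Proof.
pose w0 := dbl (iota 1 n).
have sz : size (map (@inord n) w0) == 2 * n by rewrite size_map size_dbl size_iota.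
apply/card_gt0P; exists (Tuple sz); rewrite qs_in.
have -> : qs_word (Tuple sz) = w0.
  rewrite /qs_word /= -map_comp -{2}(map_id w0); apply/eq_in_map => x.
  rewrite /w0 mem_dbl mem_iota => hx /=; rewrite inordK //; lia.
apply/qsP; split; last by apply: good_dbl; exact: iota_uniq.
rewrite /multiset_perm size_dbl size_iota eqxx /=.
apply/allP => k kin; rewrite count_dbl count_uniq_mem ?iota_uniq // kin.
by [].
Qed.

Lemma gtc_sum n (t : (2 * n).-tuple 'I_n.+1) :
  gtc (qs_word t) = \sum_(i <- iota 0 (2 * n).-1) (nth 0 (qs_word t) i > nth 0 (qs_word t) i.+1 : nat).
Proof. by rewrite /gtc count_sum size_map size_tuple. Qed.

Lemma ltc_sum n (t : (2 * n).-tuple 'I_n.+1) :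
  ltc (qs_word t) = \sum_(i <- iota 0 (2 * n).-1) (nth 0 (qs_word t) i < nth 0 (qs_word t) i.+1 : nat).
Proof. by rewrite /ltc count_sum size_map size_tuple. Qed.

Lemma sums n : 1 <= n ->
  [/\ 4 * \sum_(t in QS n) asc (qs_word t) = #|QS n| * (3 * n + 1),
      4 * \sum_(t in QS n) des (qs_word t) = #|QS n| * (3 * n + 1)
    & 2 * \sum_(t in QS n) plat (qs_word t) = #|QS n| * (n + 1)].
Proof.
move=> hn.
have szt : forall t : (2 * n).-tuple 'I_n.+1, 0 < size (qs_word t).
  by move=> t; rewrite size_map size_tuple; lia.
have GL : \sum_(t in QS n) gtc (qs_word t) = \sum_(t in QS n) ltc (qs_word t).
  under eq_bigr do rewrite gtc_sum.
  under [RHS]eq_bigr do rewrite ltc_sum.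
  rewrite exchange_big [RHS]exchange_big /=.
  apply: eq_big_seq => i; rewrite mem_iota => hi; apply: sum_gt_lt; lia.
have T3 : \sum_(t in QS n) gtc (qs_word t) + \sum_(t in QS n) ltc (qs_word t)
    + \sum_(t in QS n) plat (qs_word t) = #|QS n| * (2 * n).-1.
  rewrite -!big_split -sum_nat_const /=; apply: eq_bigr => t _.
  by rewrite plat_eqc tri size_map size_tuple.
have P := sum_plat hn.
have D : \sum_(t in QS n) des (qs_word t) = \sum_(t in QS n) gtc (qs_word t) + #|QS n|.
  rewrite -[#|QS n|]muln1 -sum_nat_const -big_split /=; apply: eq_bigr => t _.
  by rewrite des_gtc.
have A : \sum_(t in QS n) asc (qs_word t) = \sum_(t in QS n) ltc (qs_word t) + #|QS n|.
  rewrite -[#|QS n|]muln1 -sum_nat_const -big_split /=; apply: eq_bigr => t _.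
  by rewrite asc_ltc.
rewrite A D; move: GL T3 P.
move: (\sum_(t in QS n) gtc (qs_word t)) (\sum_(t in QS n) ltc (qs_word t))
  (\sum_(t in QS n) plat (qs_word t)) #|QS n| => G L S C.
move=> -> T3 P; split; nia.
Qed.

Theorem corollary3p1 (n : nat) (hn : (1 <= n)%N) :
  [/\ mean_stat asc n = ((3 * n + 1)%:R / 4%:R)%R,
      mean_stat des n = ((3 * n + 1)%:R / 4%:R)%R
    & mean_stat plat n = ((n + 1)%:R / 2%:R)%R].
Proof.
have [A D P] := sums hn.
have C0 : (#|QS n|%:R : rat) != 0%R by rewrite Num.Theory.pnatr_eq0 -lt0n QS_gt0.
rewrite /mean_stat; split; apply/eqP; rewrite GRing.eqr_div ?Num.Theory.pnatr_eq0 //.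
all: first [by rewrite -lt0n QS_gt0 | apply/eqP; rewrite -!GRing.natrM; congr (GRing.natmul 1); lia].
Qed.
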